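(* Let $R_1,\dots,R_M\subseteq\mathbb{R}^N$ be finitely many pairwise disjoint sets whose union is $\mathbb{R}^N$, and let $f:\mathbb{R}^N\to\mathbb{R}$ be continuous such that for each $i$, $|f(x)-f(y)|\le\|x-y\|$ for all $x,y\in R_i$. Then $|f(x)-f(y)|\le\|x-y\|$ for all $x,y\in\mathbb{R}^N$.
   Context: $\|\cdot\|$ is the Euclidean norm. No measurability or regularity of the sets $R_i$ is assumed. *)

(* Defs.v *)
(* R^N is modelled as row vectors 'rV[R]_N over an
   arbitrary realType R, with its canonical (product) topology, which coincides
   with the Euclidean topology. The Euclidean norm is defined explicitly, since
   the library's norm on matrices is the sup norm. *)
From HB Require Import structures.
From mathcomp Require Import all_boot all_order all_algebra.
From mathcomp Require Import all_classical all_reals all_analysis.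
Set Implicit Arguments. Unset Strict Implicit. Unset Printing Implicit Defensive.
Import Order.TTheory GRing.Theory Num.Theory.
Local Open Scope ring_scope.

Definition enorm {R : realType} {N : nat} (x : 'rV[R]_N) : R :=
  Num.sqrt (\sum_(i < N) (x ord0 i) ^+ 2).

(* Main.v *)
Require Import Defs.
From HB Require Import structures.
From mathcomp Require Import all_boot all_order all_algebra.
From mathcomp Require Import all_classical all_reals all_analysis.
From mathcomp Require Import lra.
Import Order.TTheory GRing.Theory Num.Theory.
Import numFieldNormedType.Exports.
Local Open Scope classical_set_scope.
Local Open Scope ring_scope.
Lemma local_right (R : realType) (M : nat) (P : 'I_M -> set R) (g : R -> R) (L : R) :
  0 <= L -> continuous g -> (forall t, exists i, P i t) ->
  (forall i s t, P i s -> P i t -> `|g s - g t| <= L * `|s - t|) ->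
  forall c, exists2 d, 0 < d & forall t, c < t -> t < c + d -> `|g t - g c| <= L * (t - c).
Proof.
move=> L0 gc cov lip c.
have good: forall i, \forall t \near c, c < t -> P i t -> `|g t - g c| <= L * (t - c).
  move=> i.
  case: (pselect (\forall t \near c, ~ (c < t /\ P i t))) => [H|H].
    by apply: filterS H => t H ct Pt; exfalso; apply: H.
  apply: (nearW (F := nbhs c)) => t ct Pt.
  apply/ler_addgt0Pr => e e0.
  have Hs : \forall s \near c, `|g c - g s| < e.
    by apply: (@cvgr_dist_lt _ _ _ (nbhs c) _ g (g c) (gc c) e e0).
  have [s [cs st Ps gs]] : exists s, [/\ c < s, s < t, P i s & `|g c - g s| < e].
    apply: contrapT => Hn; apply: H.
    move/nbhs_normP: Hs => -[d d0 Hd].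
    exists (Num.min d (t - c)); first by rewrite /= lt_min d0 subr_gt0.
    move=> s /= hs [cs Ps]; apply: Hn; exists s; split => //.
      move: hs; rewrite lt_min => /andP[_].
      rewrite distrC gtr0_norm ?subr_gt0 // => ?; lra.
    apply: Hd => /=; move: hs; rewrite lt_min => /andP[].
    by [].
  have h1 := lip i t s Pt Ps.
  have h2 := ler_distD (g s) (g t) (g c).
  rewrite (gtr0_norm (x := t - s)) ?subr_gt0 // in h1.
  rewrite distrC in gs.
  have h3 : L * (t - s) <= L * (t - c) by apply: ler_wpM2l => //; lra.
  lra.
have HH : \forall t \near c, forall i, c < t -> P i t -> `|g t - g c| <= L * (t - c).
  exact: (filter_forall _ good).
move/nbhs_normP: HH => -[d d0 Hd].
exists d => // t ct td.
have [i Pi] := cov t.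
apply: (Hd t _ i ct Pi) => /=.
rewrite distrC gtr0_norm ?subr_gt0 //; lra.
Qed.
Lemma lip1 (R : realType) (M : nat) (P : 'I_M -> set R) (g : R -> R) (L : R) :
  0 <= L -> continuous g -> (forall t, exists i, P i t) ->
  (forall i s t, P i s -> P i t -> `|g s - g t| <= L * `|s - t|) ->
  `|g 1 - g 0| <= L.
Proof.
move=> L0 gc cov lip.
pose S := [set t : R | 0 <= t <= 1 /\ forall s, 0 <= s <= t -> `|g s - g 0| <= L * s].
have S0 : S 0.
  split; first by rewrite lexx ler01.
  move=> s /andP[s0 s0']; have -> : s = 0 by apply/eqP; rewrite eq_le s0 s0'.
  by rewrite subrr normr0 mulr0.
have hs : has_sup S by split; [exists 0 | exists 1 => t [/andP[_ ?] _]].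
set c := sup S.
have c0 : 0 <= c := sup_upper_bound hs S0.
have c1 : c <= 1 by apply: ge_sup; [exists 0 | move=> t [/andP[_ ?] _]].
have below : forall s, 0 <= s -> s < c -> `|g s - g 0| <= L * s.
  move=> s s0 sc.
  have cs0 : 0 < c - s by rewrite subr_gt0.
  have [e [_ He] ce] := sup_adherent cs0 hs.
  rewrite -/c in ce; apply: He; rewrite s0 /=; lra.
have atc : `|g c - g 0| <= L * c.
  have [c00|cpos] := eqVneq c 0.
    by rewrite c00 subrr normr0 mulr0.
  have cp : 0 < c by rewrite lt_neqAle eq_sym cpos c0.
  apply/ler_addgt0Pr => e e0.
  have Hs : \forall s \near c, `|g c - g s| < e.
    by apply: (@cvgr_dist_lt _ _ _ (nbhs c) _ g (g c) (gc c) e e0).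
  move/nbhs_normP: Hs => -[d d0 Hd].
  pose s := c - Num.min d c / 2.
  have m1 : Num.min d c <= d by rewrite ge_min lexx.
  have m2 : Num.min d c <= c by rewrite ge_min lexx orbT.
  have m0 : 0 < Num.min d c by rewrite lt_min d0 cp.
  have hs1 : `|g c - g s| < e.
    apply: Hd => /=; rewrite /s opprB addrC subrK gtr0_norm; lra.
  have hs2 : `|g s - g 0| <= L * s by apply: below; rewrite /s; lra.
  have hs3 : L * s <= L * c by apply: ler_wpM2l => //; rewrite /s; lra.
  have := ler_distD (g s) (g c) (g 0); lra.
have [c11|c1'] := eqVneq c 1.
  by move: atc; rewrite c11 mulr1.
have clt : c < 1 by rewrite lt_neqAle c1' c1.
have [d d0 Hd] := @local_right R M P g L L0 gc cov lip c.
pose t0 := c + Num.min d (1 - c) / 2.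
have m1 : Num.min d (1 - c) <= d by rewrite ge_min lexx.
have m2 : Num.min d (1 - c) <= 1 - c by rewrite ge_min lexx orbT.
have m0 : 0 < Num.min d (1 - c) by rewrite lt_min d0 subr_gt0.
have St0 : S t0.
  split; first by apply/andP; split; rewrite /t0; lra.
  move=> s /andP[s0 st].
  have [sc|cs] := leP s c.
    have [sc'|cs'|->] := ltgtP s c.
    - by apply: below.
    - by move: sc; rewrite leNgt cs'.
    - exact: atc.
  have h1 := Hd s cs ltac:(rewrite /t0 in st; lra).
  have := ler_distD (g c) (g s) (g 0); lra.
have := sup_upper_bound hs St0; rewrite -/c /t0; lra.
Qed.
Lemma enormZ (R : realType) (N : nat) (a : R) (v : 'rV[R]_N) :
  enorm (a *: v) = `|a| * enorm v.
Proof.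
rewrite /enorm.
have -> : \sum_(i < N) (a *: v) ord0 i ^+ 2 = a ^+ 2 * \sum_(i < N) v ord0 i ^+ 2.
  rewrite mulr_sumr; apply: eq_bigr => i _; by rewrite mxE exprMn.
by rewrite sqrtrM ?sqr_ge0 // sqrtr_sqr.
Qed.

Lemma enorm_ge0 (R : realType) (N : nat) (v : 'rV[R]_N) : 0 <= enorm v.
Proof. exact: sqrtr_ge0. Qed.

Theorem mainTheorem12 (R : realType) (N M : nat)
  (Rs : 'I_M -> set 'rV[R]_N) (f : 'rV[R]_N -> R)
  (Hdisj : forall i j : 'I_M, i != j -> Rs i `&` Rs j = set0)
  (Hcover : \bigcup_(i in [set: 'I_M]) Rs i = [set: 'rV[R]_N])
  (Hcont : continuous f)
  (Hlip : forall i : 'I_M, forall x y, Rs i x -> Rs i y ->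
            `|f x - f y| <= enorm (x - y)) :
  forall x y : 'rV[R]_N, `|f x - f y| <= enorm (x - y).
Proof.
move=> x y.
pose v := y - x.
have key := @lip1 R M (fun i t => Rs i (x + t *: v)) (fun t => f (x + t *: v)) (enorm v)
  (@enorm_ge0 R N v).
have e1 : x - y = (-1) *: v by rewrite /v scaleN1r opprB.
rewrite e1 enormZ normrN normr1 mul1r distrC.
have -> : y = x + 1 *: v by rewrite scale1r /v addrC subrK.
have {2}-> : x = x + 0 *: v by rewrite scale0r addr0.
apply: key.
- move=> t; apply: (@continuous_comp _ _ _ (fun t : R => x + t *: v) f).
    apply: continuousD; first exact: cst_continuous.
    exact: scalel_continuous.
  exact: Hcont.
- move=> t.
  have : [set: 'rV[R]_N] (x + t *: v) by [].
  rewrite -Hcover => -[i _ Hi]; by exists i.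
- move=> i s t Ps Pt.
  have := Hlip i _ _ Ps Pt.
  have -> : (x + s *: v) - (x + t *: v) = (s - t) *: v.
    by rewrite scalerBl opprD addrACA subrr add0r.
  by rewrite enormZ mulrC.
Qed.
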